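(* Let $\omega>0$, $\mu>0$ and $l=B/\omega\in\mathbb Z$. Then the Stokes multipliers $c_0$ and $c_1$ of the linear system (L) are real.
   Context: Let $\omega>0$, $l\in\mathbb R$, $\mu>0$. System (L) on the Riemann sphere is: $u'=z^{-2}\big(-(lz+\mu(1+z^2))u+\frac{z}{2i\omega}v\big)$, $v'=\frac{1}{2i\omega z}u$, with $w=(u,v)$. It has irregular singular points at $0$ and $\infty$, and at $0$ it is formally equivalent to the diagonal system $\tilde u'=-z^{-2}(lz+\mu(1+z^2))\tilde u$, $\tilde v'=0$, with fundamental matrix $F(z)=\operatorname{diag}(z^{-l}e^{\mu(1/z-z)},1)$. Let $S_+$ (resp. $S_-$) be a sector with vertex $0$ containing the closed upper (resp. lower) half-plane minus $0$, whose closure avoids the opposite imaginary semiaxis $i\mathbb R_-$ (resp. $i\mathbb R_+$), with $S_-$ the complex conjugate of $S_+$. There are unique invertible matrix functions $H_\pm$ holomorphic on $S_\pm$, $C^\infty$ on $\overline{S_\pm}\setminus\{\infty\}$, with $H_\pm(0)=\mathrm{Id}$, such that $w=H_\pm(z)\tilde w$ transforms (L) into the diagonal system. The canonical fundamental matrices are $W_\pm=H_\pm F$, where the branch of $F$ on $S_-$ is the counterclockwise continuation of the branch on $S_+$; $W_{+,1}=H_+F$ with the branch of $F$ on $S_+$ obtained by continuing counterclockwise from $S_-$. Let $\Sigma_0$ (containing $\mathbb R_-$) and $\Sigma_1$ (containing $\mathbb R_+$) be the left and right components of $S_+\cap S_-$. The Stokes matrices are defined by $W_-=W_+C_0$ on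 $\Sigma_0$ and $W_{+,1}=W_-C_1$ on $\Sigma_1$; for $\mu>0$ they have the form $C_0=\begin{pmatrix}1&c_0\\0&1\end{pmatrix}$, $C_1=\begin{pmatrix}1&0\\c_1&1\end{pmatrix}$, and $c_0,c_1$ are the Stokes multipliers. *)

(* Defs.v *)
From Stdlib Require Import Reals ZArith.
Open Scope R_scope.

Definition Cx := (R * R)%type.
Definition RtoC (x : R) : Cx := (x, 0).
Definition C0 : Cx := (0, 0).
Definition C1 : Cx := (1, 0).
Definition Ci : Cx := (0, 1).
Definition Re (a : Cx) : R := fst a.
Definition Im (a : Cx) : R := snd a.
Definition Cadd (a b : Cx) : Cx := (fst a + fst b, snd a + snd b).
Definition Copp (a : Cx) : Cx := (- fst a, - snd a).
Definition Csub (a b : Cx) : Cx := Cadd a (Copp b).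
Definition Cmul (a b : Cx) : Cx :=
  (fst a * fst b - snd a * snd b, fst a * snd b + snd a * fst b).
Definition Cnorm2 (a : Cx) : R := fst a * fst a + snd a * snd a.
Definition Cnorm (a : Cx) : R := sqrt (Cnorm2 a).
Definition Cinv (a : Cx) : Cx := (fst a / Cnorm2 a, - snd a / Cnorm2 a).
Definition Cdiv (a b : Cx) : Cx := Cmul a (Cinv b).
Definition Cconj (a : Cx) : Cx := (fst a, - snd a).
Definition Cexp (a : Cx) : Cx := (exp (fst a) * cos (snd a), exp (fst a) * sin (snd a)).
Fixpoint Cpow (z : Cx) (n : nat) : Cx :=
  match n with O => C1 | S k => Cmul z (Cpow z k) end.
(* integer power z^k, single valued since k is an integer *)
Definition Cpowz (z : Cx) (k : Z) : Cx :=
  match k with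
  | Z0 => C1
  | Zpos p => Cpow z (Pos.to_nat p)
  | Zneg p => Cinv (Cpow z (Pos.to_nat p))
  end.
Definition Cpolar (r theta : R) : Cx := (r * cos theta, r * sin theta).

Record M2 := mkM2 { m11 : Cx; m12 : Cx; m21 : Cx; m22 : Cx }.
Definition Mid : M2 := mkM2 C1 C0 C0 C1.
Definition Mmul (A B : M2) : M2 :=
  mkM2 (Cadd (Cmul (m11 A) (m11 B)) (Cmul (m12 A) (m21 B)))
       (Cadd (Cmul (m11 A) (m12 B)) (Cmul (m12 A) (m22 B)))
       (Cadd (Cmul (m21 A) (m11 B)) (Cmul (m22 A) (m21 B)))
       (Cadd (Cmul (m21 A) (m12 B)) (Cmul (m22 A) (m22 B))).
Definition Msub (A B : M2) : M2 :=
  mkM2 (Csub (m11 A) (m11 B)) (Csub (m12 A) (m12 B))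
       (Csub (m21 A) (m21 B)) (Csub (m22 A) (m22 B)).
Definition Mscale (c : Cx) (A : M2) : M2 :=
  mkM2 (Cmul c (m11 A)) (Cmul c (m12 A)) (Cmul c (m21 A)) (Cmul c (m22 A)).
Definition Mdet (A : M2) : Cx := Csub (Cmul (m11 A) (m22 A)) (Cmul (m12 A) (m21 A)).
Definition Mnorm (A : M2) : R :=
  Cnorm (m11 A) + Cnorm (m12 A) + Cnorm (m21 A) + Cnorm (m22 A).

Definition is_deriv_within (S : Cx -> Prop) (f : Cx -> M2) (z : Cx) (d : M2) : Prop :=
  forall eps : R, 0 < eps -> exists del : R, 0 < del /\
    forall h : Cx, h <> C0 -> Cnorm h < del -> S (Cadd z h) ->
      Mnorm (Msub (Mscale (Cinv h) (Msub (f (Cadd z h)) (f z))) d) < eps.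

Definition cont_within (K : Cx -> Prop) (f : Cx -> M2) : Prop :=
  forall z : Cx, K z -> forall eps : R, 0 < eps -> exists del : R, 0 < del /\
    forall y : Cx, K y -> Cnorm (Csub y z) < del -> Mnorm (Msub (f y) (f z)) < eps.

(* H is holomorphic on the open set S and C^infinity on K = closure(S) (minus oo):
   all complex derivatives of H on S extend continuously to K; H itself denotes
   its extension to K. *)
Definition smooth_up_to (U K : Cx -> Prop) (H : Cx -> M2) : Prop :=
  exists Hn : nat -> Cx -> M2,
    Hn O = H /\
    (forall (n : nat) (z : Cx), U z -> is_deriv_within U (Hn n) z (Hn (Datatypes.S n) z)) /\
    (forall n : nat, cont_within K (Hn n)).

Definition Sector (al be : R) (z : Cx) : Prop :=
  exists r theta, 0 < r /\ al < theta < be /\ z = Cpolar r theta.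
Definition ClSector (al be : R) (z : Cx) : Prop :=
  z = C0 \/ exists r theta, 0 < r /\ al <= theta <= be /\ z = Cpolar r theta.
Definition SectorConj (al be : R) (z : Cx) : Prop := Sector al be (Cconj z).
Definition ClSectorConj (al be : R) (z : Cx) : Prop := ClSector al be (Cconj z).
(* left component Sigma_0 (containing R_-) and right component Sigma_1
   (containing R_+) of S_+ /\ S_- *)
Definition Sigma0 (al be : R) (z : Cx) : Prop :=
  Sector al be z /\ SectorConj al be z /\ Re z < 0.
Definition Sigma1 (al be : R) (z : Cx) : Prop :=
  Sector al be z /\ SectorConj al be z /\ 0 < Re z.

Definition two_i_om (om : R) : Cx := (0, 2 * om).
Definition polyL (mu : R) (l : Z) (z : Cx) : Cx :=
  Copp (Cadd (Cmul (RtoC (IZR l)) z) (Cmul (RtoC mu) (Cadd C1 (Cmul z z)))).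
(* coefficient matrix of (L): w' = A_L(z) w *)
Definition A_L (om mu : R) (l : Z) (z : Cx) : M2 :=
  mkM2 (Cdiv (polyL mu l z) (Cmul z z))
       (Cdiv (Cdiv z (two_i_om om)) (Cmul z z))
       (Cdiv C1 (Cmul (two_i_om om) z))
       C0.
(* coefficient matrix of the diagonal (formal normal form) system *)
Definition D_L (mu : R) (l : Z) (z : Cx) : M2 :=
  mkM2 (Cdiv (polyL mu l z) (Cmul z z)) C0 C0 C0.
Definition F_L (mu : R) (l : Z) (z : Cx) : M2 :=
  mkM2 (Cmul (Cpowz z (- l)) (Cexp (Cmul (RtoC mu) (Csub (Cinv z) z)))) C0 C0 C1.

(* H is the normalizing transformation on the sector S (closure K):
   invertible, holomorphic on S, C^oo on K, H(0) = Id, and w = H(z) w~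
   transforms (L) into the diagonal system, i.e. H' = A_L H - H D_L on S. *)
Definition normalizing (om mu : R) (l : Z) (S K : Cx -> Prop) (H : Cx -> M2) : Prop :=
  smooth_up_to S K H /\
  H C0 = Mid /\
  (forall z, S z -> Mdet (H z) <> C0) /\
  (forall z, S z ->
     is_deriv_within S H z (Msub (Mmul (A_L om mu l z) (H z)) (Mmul (H z) (D_L mu l z)))).

Definition W_L (mu : R) (l : Z) (H : Cx -> M2) (z : Cx) : M2 := Mmul (H z) (F_L mu l z).

Definition StokesC0 (c : Cx) : M2 := mkM2 C1 c C0 C1.
Definition StokesC1 (c : Cx) : M2 := mkM2 C1 C0 c C1.

(* Main.v *)
Require Import Defs.
From Stdlib Require Import Reals ZArith.
From Stdlib Require Import Lra Ring Field FunctionalExtensionality.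
From Coquelicot Require Complex.
Open Scope R_scope.
Notation C1 := Defs.C1.

Lemma Cx_ring : ring_theory C0 C1 Cadd Cmul Csub Copp (@eq Cx).
Proof.
  constructor; intros; repeat match goal with x : Cx |- _ => destruct x end;
  unfold Csub, Cadd, Cmul, Copp, C0, C1; simpl; f_equal; ring.
Qed.
Add Ring CxRing : Cx_ring.

Lemma Cnorm_Cmod a : Cnorm a = Complex.Cmod a.
Proof. unfold Cnorm, Cnorm2, Complex.Cmod. f_equal. ring. Qed.

Lemma Cnorm_tri a b : Cnorm (Cadd a b) <= Cnorm a + Cnorm b.
Proof. rewrite !Cnorm_Cmod. apply Complex.Cmod_triangle. Qed.
Lemma Cnorm_mul a b : Cnorm (Cmul a b) = Cnorm a * Cnorm b.
Proof. rewrite !Cnorm_Cmod. apply Complex.Cmod_mult. Qed.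
Lemma Cnorm_opp a : Cnorm (Copp a) = Cnorm a.
Proof. rewrite !Cnorm_Cmod. apply Complex.Cmod_opp. Qed.
Lemma Cnorm_ge0 a : 0 <= Cnorm a.
Proof. unfold Cnorm. apply sqrt_pos. Qed.
Lemma Cnorm_C1 : Cnorm C1 = 1.
Proof. unfold Cnorm, Cnorm2, C1; simpl. replace (1*1+0*0) with 1 by ring. apply sqrt_1. Qed.
Lemma Cnorm_sub a b : Cnorm (Csub a b) <= Cnorm a + Cnorm b.
Proof. unfold Csub. rewrite <- (Cnorm_opp b). apply Cnorm_tri. Qed.
Lemma Cnorm_conj a : Cnorm (Cconj a) = Cnorm a.
Proof. unfold Cnorm, Cnorm2, Cconj; simpl. f_equal; ring. Qed.
Lemma Rabs_fst_le a : Rabs (fst a) <= Cnorm a.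
Proof. unfold Cnorm, Cnorm2. rewrite <- sqrt_Rsqr_abs. apply sqrt_le_1_alt.
  unfold Rsqr. nra. Qed.
Lemma Rabs_snd_le a : Rabs (snd a) <= Cnorm a.
Proof. unfold Cnorm, Cnorm2. rewrite <- sqrt_Rsqr_abs. apply sqrt_le_1_alt.
  unfold Rsqr. nra. Qed.
Lemma Cnorm_small a d : 0 < d -> Rabs (fst a) < d/2 -> Rabs (snd a) < d/2 -> Cnorm a < d.
Proof. intros Hd H1 H2. unfold Cnorm, Cnorm2.
  rewrite <- (sqrt_Rsqr d) by lra. apply sqrt_lt_1_alt. unfold Rsqr.
  split. nra.
  assert (fst a * fst a = Rabs (fst a) * Rabs (fst a)) as E1.
  { rewrite <- Rabs_mult. rewrite Rabs_pos_eq; nra. }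
  assert (snd a * snd a = Rabs (snd a) * Rabs (snd a)) as E2.
  { rewrite <- Rabs_mult. rewrite Rabs_pos_eq; nra. }
  rewrite E1, E2. pose proof (Rabs_pos (fst a)); pose proof (Rabs_pos (snd a)). nra. Qed.
Lemma Cnorm2_eq a : Cnorm2 a = Cnorm a * Cnorm a.
Proof. unfold Cnorm. rewrite sqrt_sqrt; auto. unfold Cnorm2; nra. Qed.

Lemma Cconj_add a b : Cconj (Cadd a b) = Cadd (Cconj a) (Cconj b).
Proof. destruct a, b; unfold Cconj, Cadd; simpl; f_equal; ring. Qed.
Lemma Cconj_mul a b : Cconj (Cmul a b) = Cmul (Cconj a) (Cconj b).
Proof. destruct a, b; unfold Cconj, Cmul; simpl; f_equal; ring. Qed.
Lemma Cconj_opp a : Cconj (Copp a) = Copp (Cconj a).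
Proof. destruct a; unfold Cconj, Copp; simpl; f_equal; ring. Qed.
Lemma Cconj_sub a b : Cconj (Csub a b) = Csub (Cconj a) (Cconj b).
Proof. destruct a, b; unfold Cconj, Csub, Cadd, Copp; simpl; f_equal; ring. Qed.
Lemma Cconj_inv a : Cconj (Cinv a) = Cinv (Cconj a).
Proof. destruct a as [x y]; unfold Cconj, Cinv, Cnorm2; simpl.
  replace (x*x + - y * - y) with (x*x+y*y) by ring. f_equal. unfold Rdiv; ring. Qed.
Lemma Cconj_div a b : Cconj (Cdiv a b) = Cdiv (Cconj a) (Cconj b).
Proof. unfold Cdiv. rewrite Cconj_mul, Cconj_inv. reflexivity. Qed.
Lemma Cconj_conj a : Cconj (Cconj a) = a.
Proof. destruct a; unfold Cconj; simpl; f_equal; ring. Qed.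
Lemma Cinv_opp a : Cinv (Copp a) = Copp (Cinv a).
Proof. destruct a as [x y]; unfold Cinv, Copp, Cnorm2; simpl.
  replace (-x * -x + - y * - y) with (x*x+y*y) by ring. f_equal; unfold Rdiv; ring. Qed.
Lemma Cmul_inv_r k w : k <> C0 -> Cmul k (Cmul (Cinv k) w) = w.
Proof. destruct k as [x y], w as [u v]; intro H; unfold Cinv, Cmul, Cnorm2; simpl.
  assert (x*x+y*y <> 0).
  { intro E. apply H. unfold C0. assert (x = 0) by nra. assert (y = 0) by nra. subst; reflexivity. }
  f_equal; field; auto. Qed.


Definition sderiv (S : Cx -> Prop) (f : Cx -> Cx) (z a : Cx) : Prop :=
  forall eps, 0 < eps -> exists del, 0 < del /\ forall h, h <> C0 -> Cnorm h < del ->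
    S (Cadd z h) -> Cnorm (Csub (Cmul (Cinv h) (Csub (f (Cadd z h)) (f z))) a) < eps.

Lemma Mnorm_parts M : Cnorm (m11 M) <= Mnorm M /\ Cnorm (m12 M) <= Mnorm M /\
  Cnorm (m21 M) <= Mnorm M /\ Cnorm (m22 M) <= Mnorm M.
Proof. unfold Mnorm. pose proof (Cnorm_ge0 (m11 M)); pose proof (Cnorm_ge0 (m12 M));
  pose proof (Cnorm_ge0 (m21 M)); pose proof (Cnorm_ge0 (m22 M)). lra. Qed.

Lemma deriv_entries S F z d : is_deriv_within S F z d ->
  sderiv S (fun w => m11 (F w)) z (m11 d) /\ sderiv S (fun w => m12 (F w)) z (m12 d) /\
  sderiv S (fun w => m21 (F w)) z (m21 d) /\ sderiv S (fun w => m22 (F w)) z (m22 d).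
Proof.
  intro H. repeat split; intros eps Heps; destruct (H eps Heps) as [del [Hd Hh]];
  exists del; split; auto; intros h H1 H2 H3; specialize (Hh h H1 H2 H3);
  destruct (Mnorm_parts (Msub (Mscale (Cinv h) (Msub (F (Cadd z h)) (F z))) d)) as [? [? [? ?]]];
  simpl in *; lra.
Qed.

Lemma arith_bound a1 a2 q1 q2 v1 v2 e1 e2 eta1 eta2 :
  Rabs (q1 - v1) < eta1 -> Rabs (q2 - v2) < eta1 -> Rabs e1 < eta2 -> Rabs e2 < eta2 -> eta1 <= 1 ->
  Rabs ((q1*(a1+e1) - q2*(a2+e2)) - (a1*v1 - a2*v2)) <= (Rabs a1 + Rabs a2)*eta1 + (Rabs v1 + Rabs v2 + 2)*eta2 /\
  Rabs ((q1*(a2+e2) + q2*(a1+e1)) - (a1*v2 + a2*v1)) <= (Rabs a1 + Rabs a2)*eta1 + (Rabs v1 + Rabs v2 + 2)*eta2.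
Proof.
  intros H1 H2 H3 H4 H5.
  assert (Q1 : Rabs q1 <= Rabs v1 + 1).
  { replace q1 with (v1 + (q1 - v1)) by ring. eapply Rle_trans; [apply Rabs_triang|]. lra. }
  assert (Q2 : Rabs q2 <= Rabs v2 + 1).
  { replace q2 with (v2 + (q2 - v2)) by ring. eapply Rle_trans; [apply Rabs_triang|]. lra. }
  pose proof (Rabs_pos a1); pose proof (Rabs_pos a2); pose proof (Rabs_pos q1); pose proof (Rabs_pos q2);
  pose proof (Rabs_pos e1); pose proof (Rabs_pos e2); pose proof (Rabs_pos v1); pose proof (Rabs_pos v2);
  pose proof (Rabs_pos (q1 - v1)); pose proof (Rabs_pos (q2 - v2)).
  assert (B1: Rabs a1 * Rabs (q1 - v1) <= Rabs a1 * eta1) by (apply Rmult_le_compat; lra).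
  assert (B2: Rabs a2 * Rabs (q2 - v2) <= Rabs a2 * eta1) by (apply Rmult_le_compat; lra).
  assert (B3: Rabs q1 * Rabs e1 <= (Rabs v1 + 1) * eta2) by (apply Rmult_le_compat; lra).
  assert (B4: Rabs q2 * Rabs e2 <= (Rabs v2 + 1) * eta2) by (apply Rmult_le_compat; lra).
  assert (B5: Rabs q1 * Rabs e2 <= (Rabs v1 + 1) * eta2) by (apply Rmult_le_compat; lra).
  assert (B6: Rabs q2 * Rabs e1 <= (Rabs v2 + 1) * eta2) by (apply Rmult_le_compat; lra).
  assert (B7: Rabs a2 * Rabs (q1 - v1) <= Rabs a2 * eta1) by (apply Rmult_le_compat; lra).
  assert (B8: Rabs a1 * Rabs (q2 - v2) <= Rabs a1 * eta1) by (apply Rmult_le_compat; lra).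
  split.
  - replace ((q1*(a1+e1) - q2*(a2+e2)) - (a1*v1 - a2*v2)) with
      ((a1*(q1-v1) + - (a2*(q2-v2))) + (q1*e1 + - (q2*e2))) by ring.
    eapply Rle_trans; [apply Rabs_triang|].
    pose proof (Rabs_triang (a1*(q1-v1)) (- (a2*(q2-v2)))).
    pose proof (Rabs_triang (q1*e1) (- (q2*e2))).
    rewrite !Rabs_Ropp, !Rabs_mult in *. lra.
  - replace ((q1*(a2+e2) + q2*(a1+e1)) - (a1*v2 + a2*v1)) with
      ((a2*(q1-v1) + a1*(q2-v2)) + (q1*e2 + q2*e1)) by ring.
    eapply Rle_trans; [apply Rabs_triang|].
    pose proof (Rabs_triang (a2*(q1-v1)) (a1*(q2-v2))).
    pose proof (Rabs_triang (q1*e2) (q2*e1)).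
    rewrite !Rabs_mult in *. lra.
Qed.

Lemma chain S f a g1 g2 v1 v2 s lo hi :
  lo < s < hi -> (forall t, lo < t < hi -> S (g1 t, g2 t)) ->
  derivable_pt_lim g1 s v1 -> derivable_pt_lim g2 s v2 ->
  sderiv S f (g1 s, g2 s) a ->
  derivable_pt_lim (fun t => fst (f (g1 t, g2 t))) s (fst a * v1 - snd a * v2) /\
  derivable_pt_lim (fun t => snd (f (g1 t, g2 t))) s (fst a * v2 + snd a * v1).
Proof.
  intros Hs HS D1 D2 Df.
  set (A := Rabs (fst a) + Rabs (snd a)). set (V := Rabs v1 + Rabs v2).
  assert (HA : 0 <= A) by (unfold A; pose proof (Rabs_pos (fst a)); pose proof (Rabs_pos (snd a)); lra).
  assert (HV : 0 <= V) by (unfold V; pose proof (Rabs_pos v1); pose proof (Rabs_pos v2); lra).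
  assert (KEY : forall eps, 0 < eps -> exists del, 0 < del /\ forall h, h <> 0 -> Rabs h < del ->
     Rabs ((fst (f (g1 (s+h), g2 (s+h))) - fst (f (g1 s, g2 s)))/h - (fst a * v1 - snd a * v2)) < eps /\
     Rabs ((snd (f (g1 (s+h), g2 (s+h))) - snd (f (g1 s, g2 s)))/h - (fst a * v2 + snd a * v1)) < eps).
  { intros eps He.
    set (eta1 := Rmin 1 (eps / (2 * (A + 1)))).
    set (eta2 := eps / (2 * (V + 2))).
    assert (He1 : 0 < eta1). { unfold eta1. apply Rmin_glb_lt; [lra|]. apply Rdiv_lt_0_compat; lra. }
    assert (He2 : 0 < eta2). { unfold eta2. apply Rdiv_lt_0_compat; lra. }
    destruct (D1 eta1 He1) as [d1 H1]. destruct (D2 eta1 He1) as [d2 H2].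
    destruct (Df eta2 He2) as [df [Hdf Hf]].
    set (d3 := df / (2 * (V + 2))).
    assert (Hd3 : 0 < d3) by (unfold d3; apply Rdiv_lt_0_compat; lra).
    exists (Rmin (Rmin (Rmin d1 d2) (Rmin d3 (s - lo))) (hi - s)).
    split.
    { pose proof (cond_pos d1); pose proof (cond_pos d2).
      repeat apply Rmin_glb_lt; lra. }
    intros h Hh0 Hh.
    assert (Hh1 : Rabs h < d1) by (repeat (eapply Rlt_le_trans in Hh; [|apply Rmin_l]); auto).
    assert (Hh2 : Rabs h < d2).
    { eapply Rlt_le_trans in Hh; [|apply Rmin_l]. eapply Rlt_le_trans in Hh; [|apply Rmin_l]. 
      eapply Rlt_le_trans in Hh; [|apply Rmin_r]. auto. }
    assert (Hh3 : Rabs h < d3).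
    { eapply Rlt_le_trans in Hh; [|apply Rmin_l]. eapply Rlt_le_trans in Hh; [|apply Rmin_r]. 
      eapply Rlt_le_trans in Hh; [|apply Rmin_l]. auto. }
    assert (Hh4 : Rabs h < s - lo).
    { eapply Rlt_le_trans in Hh; [|apply Rmin_l]. eapply Rlt_le_trans in Hh; [|apply Rmin_r]. 
      eapply Rlt_le_trans in Hh; [|apply Rmin_r]. auto. }
    assert (Hh5 : Rabs h < hi - s) by (eapply Rlt_le_trans in Hh; [|apply Rmin_r]; auto).
    specialize (H1 h Hh0 Hh1). specialize (H2 h Hh0 Hh2).
    set (q1 := (g1 (s + h) - g1 s) / h) in *.
    set (q2 := (g2 (s + h) - g2 s) / h) in *.
    assert (Hq1 : g1 (s+h) - g1 s = q1 * h) by (unfold q1; field; auto).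
    assert (Hq2 : g2 (s+h) - g2 s = q2 * h) by (unfold q2; field; auto).
    assert (Hin : lo < s + h < hi) by (apply Rabs_def2 in Hh4; apply Rabs_def2 in Hh5; lra).
    assert (Heta1 : eta1 <= 1) by (unfold eta1; apply Rmin_l).
    assert (EX : exists e : Cx, Rabs (fst e) < eta2 /\ Rabs (snd e) < eta2 /\
       Csub (f (g1 (s+h), g2 (s+h))) (f (g1 s, g2 s)) = Cmul (q1*h, q2*h) (Cadd a e)).
    { set (k := (q1*h, q2*h)).
      assert (NZ : k <> C0 -> exists e : Cx, Rabs (fst e) < eta2 /\ Rabs (snd e) < eta2 /\
         Csub (f (g1 (s+h), g2 (s+h))) (f (g1 s, g2 s)) = Cmul k (Cadd a e)).
      { intro Hk.
        assert (Hpt : Cadd (g1 s, g2 s) k = (g1 (s+h), g2 (s+h))).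
        { unfold k, Cadd; simpl. f_equal; lra. }
        assert (Hqa1 : Rabs q1 <= Rabs v1 + 1).
        { replace q1 with (v1 + (q1 - v1)) by ring. eapply Rle_trans; [apply Rabs_triang|]. lra. }
        assert (Hqa2 : Rabs q2 <= Rabs v2 + 1).
        { replace q2 with (v2 + (q2 - v2)) by ring. eapply Rle_trans; [apply Rabs_triang|]. lra. }
        assert (Hnk : Cnorm k < df).
        { apply Cnorm_small; auto; unfold k; simpl; rewrite Rabs_mult.
          - assert (Rabs q1 * Rabs h < (V+2) * d3).
            { destruct (Req_dec (Rabs q1) 0) as [E|E]. rewrite E. pose proof (Rabs_pos h). nra.
              assert (0 < Rabs q1) by (pose proof (Rabs_pos q1); lra).
              apply Rle_lt_trans with ((V+2) * Rabs h). apply Rmult_le_compat_r. apply Rabs_pos.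
              unfold V; pose proof (Rabs_pos v2); lra.
              apply Rmult_lt_compat_l; lra. }
            unfold d3 in H. replace ((V + 2) * (df / (2 * (V + 2)))) with (df/2) in H by (field; lra).
            lra.
          - assert (Rabs q2 * Rabs h < (V+2) * d3).
            { destruct (Req_dec (Rabs q2) 0) as [E|E]. rewrite E. pose proof (Rabs_pos h). nra.
              assert (0 < Rabs q2) by (pose proof (Rabs_pos q2); lra).
              apply Rle_lt_trans with ((V+2) * Rabs h). apply Rmult_le_compat_r. apply Rabs_pos.
              unfold V; pose proof (Rabs_pos v1); lra.
              apply Rmult_lt_compat_l; lra. }
            unfold d3 in H. replace ((V + 2) * (df / (2 * (V + 2)))) with (df/2) in H by (field; lra).
            lra. }
        assert (HSk : S (Cadd (g1 s, g2 s) k)) by (rewrite Hpt; apply HS; auto).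
        specialize (Hf k Hk Hnk HSk). rewrite Hpt in Hf.
        set (e := Csub (Cmul (Cinv k) (Csub (f (g1 (s + h), g2 (s + h))) (f (g1 s, g2 s)))) a) in *.
        exists e. split; [eapply Rle_lt_trans; [apply Rabs_fst_le|exact Hf]|].
        split; [eapply Rle_lt_trans; [apply Rabs_snd_le|exact Hf]|].
        replace (Cadd a e) with (Cmul (Cinv k) (Csub (f (g1 (s + h), g2 (s + h))) (f (g1 s, g2 s))))
          by (unfold e; ring).
        symmetry; apply Cmul_inv_r; auto. }
      destruct (Req_dec q1 0) as [Z1|Z1]; [destruct (Req_dec q2 0) as [Z2|Z2]|].
      - exists C0. unfold C0; simpl. rewrite !Rabs_R0. split; [lra|split; [lra|]].
        assert (E1 : g1 (s+h) = g1 s) by (rewrite Z1 in Hq1; lra).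
        assert (E2 : g2 (s+h) = g2 s) by (rewrite Z2 in Hq2; lra).
        unfold k. rewrite E1, E2, Z1, Z2. destruct (f (g1 s, g2 s)).
        unfold Csub, Cadd, Copp, Cmul; simpl; f_equal; ring.
      - apply NZ. unfold k, C0; intro E; injection E; intros; apply Z2. nra.
      - apply NZ. unfold k, C0; intro E; injection E; intros; apply Z1. nra. }
    destruct EX as [e [He1' [He2' Heq]]].
    assert (Eq1 : fst (f (g1 (s + h), g2 (s + h))) - fst (f (g1 s, g2 s)) = (q1*h)*(fst a + fst e) - (q2*h)*(snd a + snd e)).
    { apply (f_equal fst) in Heq. unfold Csub, Cadd, Copp, Cmul in Heq; simpl in Heq. lra. }
    assert (Eq2 : snd (f (g1 (s + h), g2 (s + h))) - snd (f (g1 s, g2 s)) = (q1*h)*(snd a + snd e) + (q2*h)*(fst a + fst e)).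
    { apply (f_equal snd) in Heq. unfold Csub, Cadd, Copp, Cmul in Heq; simpl in Heq. lra. }
    rewrite Eq1, Eq2.
    assert (Bnd : A * eta1 + (V + 2) * eta2 < eps).
    { assert (A * eta1 <= A * (eps / (2 * (A + 1)))) by (apply Rmult_le_compat_l; auto; unfold eta1; apply Rmin_r).
      assert (A * (eps / (2 * (A + 1))) < eps / 2).
      { replace (A * (eps / (2 * (A + 1)))) with ((A / (A+1)) * (eps/2)) by (field; lra).
        assert (A / (A+1) < 1). { apply Rmult_lt_reg_r with (A+1). lra. field_simplify; lra. }
        nra. }
      unfold eta2. replace ((V + 2) * (eps / (2 * (V + 2)))) with (eps/2) by (field; lra). lra. }
    destruct (arith_bound (fst a) (snd a) q1 q2 v1 v2 (fst e) (snd e) eta1 eta2 H1 H2 He1' He2' Heta1) as [B1 B2].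
    fold A in B1, B2. fold V in B1, B2.
    split.
    - replace ((q1 * h * (fst a + fst e) - q2 * h * (snd a + snd e)) / h) with (q1 * (fst a + fst e) - q2 * (snd a + snd e)) by (field; auto).
      lra.
    - replace ((q1 * h * (snd a + snd e) + q2 * h * (fst a + fst e)) / h) with (q1 * (snd a + snd e) + q2 * (fst a + fst e)) by (field; auto).
      lra. }
  split; intros eps He; destruct (KEY eps He) as [del [Hdel K]];
    exists (mkposreal del Hdel); intros h Hh0 Hh; simpl in Hh; apply (K h Hh0 Hh).
Qed.


Definition pder (g : R -> Cx) (s : R) (v : Cx) : Prop :=
  derivable_pt_lim (fun t => fst (g t)) s (fst v) /\
  derivable_pt_lim (fun t => snd (g t)) s (snd v).

Lemma pder_mul f g s a b : pder f s a -> pder g s b ->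
  pder (fun t => Cmul (f t) (g t)) s (Cadd (Cmul a (g s)) (Cmul (f s) b)).
Proof.
  intros [F1 F2] [G1 G2]; split; simpl.
  - replace (fst a * fst (g s) - snd a * snd (g s) + (fst (f s) * fst b - snd (f s) * snd b))
      with ((fst a * fst (g s) + fst (f s) * fst b) - (snd a * snd (g s) + snd (f s) * snd b)) by ring.
    apply (derivable_pt_lim_minus (fun t => fst (f t) * fst (g t)) (fun t => snd (f t) * snd (g t)));
    apply (derivable_pt_lim_mult (fun t => _) (fun t => _)); auto.
  - replace (fst a * snd (g s) + snd a * fst (g s) + (fst (f s) * snd b + snd (f s) * fst b))
      with ((fst a * snd (g s) + fst (f s) * snd b) + (snd a * fst (g s) + snd (f s) * fst b)) by ring.
    apply (derivable_pt_lim_plus (fun t => fst (f t) * snd (g t)) (fun t => snd (f t) * fst (g t)));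
    apply (derivable_pt_lim_mult (fun t => _) (fun t => _)); auto.
Qed.

Lemma pder_add f g s a b : pder f s a -> pder g s b ->
  pder (fun t => Cadd (f t) (g t)) s (Cadd a b).
Proof.
  intros [F1 F2] [G1 G2]; split; simpl;
  apply (derivable_pt_lim_plus (fun t => _) (fun t => _)); auto.
Qed.

Lemma pder_opp f s a : pder f s a -> pder (fun t => Copp (f t)) s (Copp a).
Proof.
  intros [F1 F2]; split; simpl; apply (derivable_pt_lim_opp (fun t => _)); auto.
Qed.

Lemma pder_sub f g s a b : pder f s a -> pder g s b ->
  pder (fun t => Csub (f t) (g t)) s (Csub a b).
Proof. intros. unfold Csub. apply pder_add; auto. apply pder_opp; auto. Qed.

Lemma pder_const c s : pder (fun _ => c) s C0.
Proof. split; simpl; apply (derivable_pt_lim_const _). Qed.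

Lemma pder_ext f g s v : (forall t, f t = g t) -> pder f s v -> pder g s v.
Proof. intros E H. replace g with f; auto. apply functional_extensionality; auto. Qed.

Lemma pder_val f s v w : v = w -> pder f s v -> pder f s w.
Proof. intros ->; auto. Qed.

Lemma phi_deriv g s v : pder g s v ->
  derivable_pt_lim (fun t => Cnorm2 (g t)) s (2 * (fst (g s) * fst v + snd (g s) * snd v)).
Proof.
  intros [G1 G2]. unfold Cnorm2.
  replace (2 * (fst (g s) * fst v + snd (g s) * snd v)) with
    ((fst v * fst (g s) + fst (g s) * fst v) + (snd v * snd (g s) + snd (g s) * snd v)) by ring.
  apply (derivable_pt_lim_plus (fun t => fst (g t) * fst (g t)) (fun t => snd (g t) * snd (g t)));
  apply (derivable_pt_lim_mult (fun t => _) (fun t => _)); auto.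
Qed.

Lemma Cnorm2_ge0 w : 0 <= Cnorm2 w.
Proof. unfold Cnorm2; nra. Qed.

Lemma Cnorm2_zero w : Cnorm2 w <= 0 -> w = C0.
Proof. destruct w as [x y]; unfold Cnorm2, C0; simpl; intro. f_equal; nra. Qed.

Lemma mono_le (g k : R -> Cx) a b : a <= b ->
  (forall s, a <= s <= b -> pder g s (Cmul (k s) (g s))) ->
  (forall s, a <= s <= b -> fst (k s) <= 0) ->
  Cnorm2 (g b) <= Cnorm2 (g a).
Proof.
  intros Hab D K. destruct (Req_dec a b) as [->|Hne]; [lra|].
  destruct (MVT_cor2 (fun t => Cnorm2 (g t))
     (fun c => 2 * (fst (g c) * fst (Cmul (k c) (g c)) + snd (g c) * snd (Cmul (k c) (g c)))) a b)
    as [c [Hc Hc2]]; [lra| |].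
  - intros c Hc. apply phi_deriv. apply D; auto.
  - assert (E : 2 * (fst (g c) * fst (Cmul (k c) (g c)) + snd (g c) * snd (Cmul (k c) (g c)))
              = 2 * fst (k c) * Cnorm2 (g c)) by (unfold Cmul, Cnorm2; simpl; ring).
    rewrite E in Hc. pose proof (Cnorm2_ge0 (g c)). pose proof (K c ltac:(lra)).
    assert (2 * fst (k c) * Cnorm2 (g c) * (b - a) <= 0).
    { assert (0 <= -(2 * fst (k c)) * Cnorm2 (g c)) by (apply Rmult_le_pos; lra).
      assert (0 <= (-(2 * fst (k c)) * Cnorm2 (g c)) * (b - a)) by (apply Rmult_le_pos; lra).
      lra. }
    lra.
Qed.

Lemma mono_zero (g k : R -> Cx) a b : a <= b ->
  (forall s, a <= s <= b -> pder g s (Cmul (k s) (g s))) ->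
  (forall s, a <= s <= b -> fst (k s) <= 0) ->
  g a = C0 -> g b = C0.
Proof.
  intros Hab D K Ha. apply Cnorm2_zero. pose proof (mono_le g k a b Hab D K).
  rewrite Ha in H. replace (Cnorm2 C0) with 0 in H by (unfold Cnorm2, C0; simpl; ring). lra.
Qed.

Lemma lim_zero (g k : R -> Cx) t0 :
  (forall s, 0 < s < t0 -> pder g s (Cmul (k s) (g s))) ->
  (forall s, 0 < s < t0 -> fst (k s) <= 0) ->
  (forall eps, 0 < eps -> exists del, 0 < del /\ forall s, 0 < s < del -> Cnorm (g s) < eps) ->
  forall s, 0 < s < t0 -> g s = C0.
Proof.
  intros D K L s Hs. apply Cnorm2_zero.
  destruct (Rle_or_lt (Cnorm2 (g s)) 0) as [H|H]; auto. exfalso.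
  destruct (L (sqrt (Cnorm2 (g s)))) as [del [Hdel Hl]]. apply sqrt_lt_R0; auto.
  set (a := Rmin (del/2) s).
  assert (Ha : 0 < a <= s). { unfold a; split. apply Rmin_glb_lt; lra. apply Rmin_r. }
  assert (Ha2 : a < del). { unfold a. eapply Rle_lt_trans. apply Rmin_l. lra. }
  pose proof (Hl a ltac:(lra)).
  pose proof (mono_le g k a s (proj2 Ha) ltac:(intros; apply D; lra) ltac:(intros; apply K; lra)).
  rewrite (Cnorm2_eq (g a)) in H1. pose proof (Cnorm_ge0 (g a)).
  assert (Cnorm (g a) * Cnorm (g a) < sqrt (Cnorm2 (g s)) * sqrt (Cnorm2 (g s))) by nra.
  rewrite sqrt_sqrt in H3 by lra. lra.
Qed.


Definition Jc (M : M2) : M2 :=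
  mkM2 (Cconj (m11 M)) (Copp (Cconj (m12 M))) (Copp (Cconj (m21 M))) (Cconj (m22 M)).
Definition Gm (Hp : Cx -> M2) (z : Cx) : M2 := Jc (Hp (Cconj z)).
Definition Aprime (om mu : R) (l : Z) (H : Cx -> M2) (z : Cx) : M2 :=
  Msub (Mmul (A_L om mu l z) (H z)) (Mmul (H z) (D_L mu l z)).

Lemma Cconj_C0 : Cconj C0 = C0.
Proof. unfold Cconj, C0; simpl; f_equal; ring. Qed.
Lemma Cconj_C1 : Cconj C1 = C1.
Proof. unfold Cconj, C1; simpl; f_equal; ring. Qed.
Lemma Cconj_T om : Cconj (two_i_om om) = Copp (two_i_om om).
Proof. unfold Cconj, two_i_om, Copp; simpl; f_equal; ring. Qed.
Lemma polyL_conj mu l z : Cconj (polyL mu l (Cconj z)) = polyL mu l z.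
Proof. destruct z; unfold polyL, Cconj, Copp, Cadd, Cmul, RtoC, C1; simpl; f_equal; ring. Qed.
Lemma Cdiv_opp_l a b : Cdiv (Copp a) b = Copp (Cdiv a b).
Proof. unfold Cdiv; ring. Qed.
Lemma Cdiv_opp_r a b : Cdiv a (Copp b) = Copp (Cdiv a b).
Proof. unfold Cdiv; rewrite Cinv_opp; ring. Qed.

Lemma LA11 mu l z : Cconj (Cdiv (polyL mu l (Cconj z)) (Cmul (Cconj z) (Cconj z))) = Cdiv (polyL mu l z) (Cmul z z).
Proof. rewrite Cconj_div, polyL_conj, Cconj_mul, Cconj_conj. reflexivity. Qed.
Lemma LA12 om z : Cconj (Cdiv (Cdiv (Cconj z) (two_i_om om)) (Cmul (Cconj z) (Cconj z))) =
  Copp (Cdiv (Cdiv z (two_i_om om)) (Cmul z z)).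
Proof. rewrite !Cconj_div, Cconj_mul, Cconj_conj, Cconj_T, Cdiv_opp_r, Cdiv_opp_l. reflexivity. Qed.
Lemma LA21 om z : Cconj (Cdiv C1 (Cmul (two_i_om om) (Cconj z))) = Copp (Cdiv C1 (Cmul (two_i_om om) z)).
Proof. rewrite Cconj_div, Cconj_C1, Cconj_mul, Cconj_conj, Cconj_T.
  replace (Cmul (Copp (two_i_om om)) z) with (Copp (Cmul (two_i_om om) z)) by ring.
  apply Cdiv_opp_r. Qed.

Lemma Aprime_G om mu l Hp z :
  Jc (Aprime om mu l Hp (Cconj z)) = Aprime om mu l (Gm Hp) z.
Proof.
  unfold Gm. destruct (Hp (Cconj z)) as [p11 p12 p21 p22] eqn:E.
  unfold Aprime. rewrite E.
  unfold Jc, Msub, Mmul, A_L, D_L. cbn [m11 m12 m21 m22].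
  rewrite ?Cconj_sub, ?Cconj_add, ?Cconj_mul, ?Cconj_opp, ?Cconj_C0, ?LA11, ?LA12, ?LA21.
  f_equal; ring.
Qed.

Lemma conj_entry ci a b m :
  Csub (Cmul ci (Csub (Cconj a) (Cconj b))) (Cconj m) = Cconj (Csub (Cmul (Cconj ci) (Csub a b)) m).
Proof. destruct ci, a, b, m; unfold Csub, Cadd, Copp, Cmul, Cconj; simpl; f_equal; ring. Qed.
Lemma conj_entry' ci a b m :
  Csub (Cmul ci (Csub (Copp (Cconj a)) (Copp (Cconj b)))) (Copp (Cconj m)) =
  Copp (Cconj (Csub (Cmul (Cconj ci) (Csub a b)) m)).
Proof. destruct ci, a, b, m; unfold Csub, Cadd, Copp, Cmul, Cconj; simpl; f_equal; ring. Qed.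

Lemma Mnorm_Jc M : Mnorm (Jc M) = Mnorm M.
Proof. unfold Mnorm, Jc; simpl. rewrite !Cnorm_opp, !Cnorm_conj. reflexivity. Qed.

Lemma G_deriv_raw (S : Cx -> Prop) Hp z d :
  is_deriv_within S Hp (Cconj z) d ->
  is_deriv_within (fun w => S (Cconj w)) (Gm Hp) z (Jc d).
Proof.
  intros H eps Heps. destruct (H eps Heps) as [del [Hdel K]]. exists del; split; auto.
  intros h Hh0 Hh HS.
  assert (Hc0 : Cconj h <> C0).
  { intro E. apply Hh0. rewrite <- (Cconj_conj h), E. apply Cconj_C0. }
  rewrite Cconj_add in HS.
  specialize (K (Cconj h) Hc0 ltac:(rewrite Cnorm_conj; auto) HS).
  unfold Gm. rewrite Cconj_add.
  replace (Msub (Mscale (Cinv h) (Msub (Jc (Hp (Cadd (Cconj z) (Cconj h)))) (Jc (Hp (Cconj z))))) (Jc d))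
    with (Jc (Msub (Mscale (Cinv (Cconj h)) (Msub (Hp (Cadd (Cconj z) (Cconj h))) (Hp (Cconj z)))) d)).
  { rewrite Mnorm_Jc; auto. }
  destruct (Hp (Cadd (Cconj z) (Cconj h))), (Hp (Cconj z)), d.
  unfold Jc, Msub, Mscale; simpl. rewrite <- Cconj_inv.
  rewrite !conj_entry, !conj_entry'. reflexivity.
Qed.


Definition Z11 (X Y : Cx -> M2) z := Csub (Cmul (m22 (X z)) (m11 (Y z))) (Cmul (m12 (X z)) (m21 (Y z))).
Definition Z12 (X Y : Cx -> M2) z := Csub (Cmul (m22 (X z)) (m12 (Y z))) (Cmul (m12 (X z)) (m22 (Y z))).
Definition Z21 (X Y : Cx -> M2) z := Csub (Cmul (m11 (X z)) (m21 (Y z))) (Cmul (m21 (X z)) (m11 (Y z))).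
Definition Z22 (X Y : Cx -> M2) z := Csub (Cmul (m11 (X z)) (m22 (Y z))) (Cmul (m21 (X z)) (m12 (Y z))).
Definition dL (mu : R) (l : Z) z := Cdiv (polyL mu l z) (Cmul z z).

Lemma entry_pder (U : Cx -> Prop) (X : Cx -> M2) Xp g1 g2 v1 v2 s lo hi :
  lo < s < hi -> (forall t, lo < t < hi -> U (g1 t, g2 t)) ->
  derivable_pt_lim g1 s v1 -> derivable_pt_lim g2 s v2 ->
  is_deriv_within U X (g1 s, g2 s) Xp ->
  pder (fun t => m11 (X (g1 t, g2 t))) s (Cmul (m11 Xp) (v1, v2)) /\
  pder (fun t => m12 (X (g1 t, g2 t))) s (Cmul (m12 Xp) (v1, v2)) /\
  pder (fun t => m21 (X (g1 t, g2 t))) s (Cmul (m21 Xp) (v1, v2)) /\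
  pder (fun t => m22 (X (g1 t, g2 t))) s (Cmul (m22 Xp) (v1, v2)).
Proof.
  intros Hs HU D1 D2 DX. destruct (deriv_entries _ _ _ _ DX) as [E1 [E2 [E3 E4]]].
  repeat split;
  [ apply (chain U (fun w => m11 (X w)) _ g1 g2 v1 v2 s lo hi)
  | apply (chain U (fun w => m11 (X w)) _ g1 g2 v1 v2 s lo hi)
  | apply (chain U (fun w => m12 (X w)) _ g1 g2 v1 v2 s lo hi)
  | apply (chain U (fun w => m12 (X w)) _ g1 g2 v1 v2 s lo hi)
  | apply (chain U (fun w => m21 (X w)) _ g1 g2 v1 v2 s lo hi)
  | apply (chain U (fun w => m21 (X w)) _ g1 g2 v1 v2 s lo hi)
  | apply (chain U (fun w => m22 (X w)) _ g1 g2 v1 v2 s lo hi)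
  | apply (chain U (fun w => m22 (X w)) _ g1 g2 v1 v2 s lo hi)]; auto.
Qed.

Section ZP.
Variables (om mu : R) (l : Z) (U : Cx -> Prop) (X Y : Cx -> M2) (g1 g2 v1 v2 : R -> R) (lo hi : R).
Hypothesis HX : forall z, U z -> is_deriv_within U X z (Aprime om mu l X z).
Hypothesis HY : forall z, U z -> is_deriv_within U Y z (Aprime om mu l Y z).
Hypothesis HU : forall t, lo < t < hi -> U (g1 t, g2 t).
Hypothesis D1 : forall t, lo < t < hi -> derivable_pt_lim g1 t (v1 t).
Hypothesis D2 : forall t, lo < t < hi -> derivable_pt_lim g2 t (v2 t).

Lemma Zpath s : lo < s < hi ->
  let z := (g1 s, g2 s) in let v := (v1 s, v2 s) in
  pder (fun t => Csub (Z11 X Y (g1 t, g2 t)) C1) s (Cmul C0 (Csub (Z11 X Y z) C1)) /\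
  pder (fun t => Csub (Z22 X Y (g1 t, g2 t)) C1) s (Cmul C0 (Csub (Z22 X Y z) C1)) /\
  pder (fun t => Z12 X Y (g1 t, g2 t)) s (Cmul (Cmul (dL mu l z) v) (Z12 X Y z)) /\
  pder (fun t => Z21 X Y (g1 t, g2 t)) s (Cmul (Copp (Cmul (dL mu l z) v)) (Z21 X Y z)).
Proof.
  intros Hs z v.
  destruct (entry_pder U X _ g1 g2 (v1 s) (v2 s) s lo hi Hs HU (D1 s Hs) (D2 s Hs) (HX _ (HU s Hs)))
    as [X11 [X12 [X21 X22]]].
  destruct (entry_pder U Y _ g1 g2 (v1 s) (v2 s) s lo hi Hs HU (D1 s Hs) (D2 s Hs) (HY _ (HU s Hs)))
    as [Y11 [Y12 [Y21 Y22]]].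
  unfold Z11, Z12, Z21, Z22.
  repeat split.
  all: first
   [ eapply pder_val; [| apply pder_sub; [apply pder_sub; apply pder_mul; eassumption | apply pder_const]]
   | eapply pder_val; [| apply pder_sub; apply pder_mul; eassumption] ].
  all: unfold Aprime, Msub, Mmul, A_L, D_L, dL; cbn [m11 m12 m21 m22]; fold z; fold v; ring.
Qed.
End ZP.


Lemma cn3 p q r u w : Cnorm (Csub (Cadd (Cmul p q) r) (Cmul u w)) <= Cnorm p * Cnorm q + Cnorm r + Cnorm u * Cnorm w.
Proof. eapply Rle_trans; [apply Cnorm_sub|]. rewrite !Cnorm_mul.
  pose proof (Cnorm_tri (Cmul p q) r). rewrite Cnorm_mul in H. lra. Qed.

Lemma cn2 p q u w : Cnorm (Csub (Cmul p q) (Cmul u w)) <= Cnorm p * Cnorm q + Cnorm u * Cnorm w.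
Proof. eapply Rle_trans; [apply Cnorm_sub|]. rewrite !Cnorm_mul. lra. Qed.

Lemma near1 a : Cnorm a <= Cnorm (Csub a C1) + 1.
Proof. replace a with (Cadd (Csub a C1) C1) at 1 by ring. eapply Rle_trans; [apply Cnorm_tri|].
  rewrite Cnorm_C1. lra. Qed.

Lemma Csub0 a : Csub a C0 = a.
Proof. ring. Qed.

Lemma near_parts A e : Mnorm (Msub A Mid) < e ->
  Cnorm (Csub (m11 A) C1) < e /\ Cnorm (m12 A) < e /\ Cnorm (m21 A) < e /\ Cnorm (Csub (m22 A) C1) < e.
Proof. intro H. destruct (Mnorm_parts (Msub A Mid)) as [? [? [? ?]]].
  unfold Msub, Mid in *; simpl in *. rewrite !Csub0 in *. repeat split; lra. Qed.

Lemma Zbounds A B e : 0 < e <= 1 -> Mnorm (Msub A Mid) < e -> Mnorm (Msub B Mid) < e ->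
  Cnorm (Csub (Csub (Cmul (m22 A) (m11 B)) (Cmul (m12 A) (m21 B))) C1) < 4*e /\
  Cnorm (Csub (Cmul (m22 A) (m12 B)) (Cmul (m12 A) (m22 B))) < 4*e /\
  Cnorm (Csub (Cmul (m11 A) (m21 B)) (Cmul (m21 A) (m11 B))) < 4*e /\
  Cnorm (Csub (Csub (Cmul (m11 A) (m22 B)) (Cmul (m21 A) (m12 B))) C1) < 4*e.
Proof.
  intros He HA HB. destruct (near_parts A e HA) as [a11 [a12 [a21 a22]]].
  destruct (near_parts B e HB) as [b11 [b12 [b21 b22]]].
  pose proof (near1 (m11 A)); pose proof (near1 (m22 A)); pose proof (near1 (m11 B)); pose proof (near1 (m22 B)).
  pose proof (Cnorm_ge0 (m11 A)); pose proof (Cnorm_ge0 (m12 A)); pose proof (Cnorm_ge0 (m21 A)); pose proof (Cnorm_ge0 (m22 A)).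
  pose proof (Cnorm_ge0 (m11 B)); pose proof (Cnorm_ge0 (m12 B)); pose proof (Cnorm_ge0 (m21 B)); pose proof (Cnorm_ge0 (m22 B)).
  pose proof (Cnorm_ge0 (Csub (m11 A) C1)); pose proof (Cnorm_ge0 (Csub (m22 A) C1)).
  pose proof (Cnorm_ge0 (Csub (m11 B) C1)); pose proof (Cnorm_ge0 (Csub (m22 B) C1)).
  repeat split.
  - replace (Csub (Csub (Cmul (m22 A) (m11 B)) (Cmul (m12 A) (m21 B))) C1) with
      (Csub (Cadd (Cmul (m22 A) (Csub (m11 B) C1)) (Csub (m22 A) C1)) (Cmul (m12 A) (m21 B))) by ring.
    eapply Rle_lt_trans; [apply cn3|].
    assert (Cnorm (m22 A) * Cnorm (Csub (m11 B) C1) <= (1 + e) * e) by (apply Rmult_le_compat; lra).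
    assert (Cnorm (m12 A) * Cnorm (m21 B) <= e * e) by (apply Rmult_le_compat; lra). nra.
  - eapply Rle_lt_trans; [apply cn2|].
    assert (Cnorm (m22 A) * Cnorm (m12 B) <= (1 + e) * e) by (apply Rmult_le_compat; lra).
    assert (Cnorm (m12 A) * Cnorm (m22 B) <= e * (1 + e)) by (apply Rmult_le_compat; lra). nra.
  - eapply Rle_lt_trans; [apply cn2|].
    assert (Cnorm (m11 A) * Cnorm (m21 B) <= (1 + e) * e) by (apply Rmult_le_compat; lra).
    assert (Cnorm (m21 A) * Cnorm (m11 B) <= e * (1 + e)) by (apply Rmult_le_compat; lra). nra.
  - replace (Csub (Csub (Cmul (m11 A) (m22 B)) (Cmul (m21 A) (m12 B))) C1) with
      (Csub (Cadd (Cmul (m11 A) (Csub (m22 B) C1)) (Csub (m11 A) C1)) (Cmul (m21 A) (m12 B))) by ring.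
    eapply Rle_lt_trans; [apply cn3|].
    assert (Cnorm (m11 A) * Cnorm (Csub (m22 B) C1) <= (1 + e) * e) by (apply Rmult_le_compat; lra).
    assert (Cnorm (m21 A) * Cnorm (m12 B) <= e * e) by (apply Rmult_le_compat; lra). nra.
Qed.

Definition cont0 (K : Cx -> Prop) (X : Cx -> M2) : Prop :=
  forall e, 0 < e -> exists d, 0 < d /\ forall y, K y -> Cnorm (Csub y C0) < d -> Mnorm (Msub (X y) Mid) < e.

Lemma Zlim K X Y (p : R -> Cx) : cont0 K X -> cont0 K Y ->
  (forall s, 0 < s -> K (p s)) -> (forall s, 0 < s -> Cnorm (Csub (p s) C0) <= s) ->
  forall eps, 0 < eps -> exists del, 0 < del /\ forall s, 0 < s < del ->
    Cnorm (Csub (Z11 X Y (p s)) C1) < eps /\ Cnorm (Z12 X Y (p s)) < eps /\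
    Cnorm (Z21 X Y (p s)) < eps /\ Cnorm (Csub (Z22 X Y (p s)) C1) < eps.
Proof.
  intros CX CY HK Hp eps He.
  set (e := Rmin 1 (eps / 4)).
  assert (He0 : 0 < e <= 1). { unfold e; split; [apply Rmin_glb_lt; lra | apply Rmin_l]. }
  assert (He1 : 4 * e <= eps). { unfold e. pose proof (Rmin_r 1 (eps/4)). lra. }
  destruct (CX e (proj1 He0)) as [d1 [Hd1 K1]]. destruct (CY e (proj1 He0)) as [d2 [Hd2 K2]].
  exists (Rmin d1 d2). split; [apply Rmin_glb_lt; auto|].
  intros s Hs.
  assert (s < d1) by (pose proof (Rmin_l d1 d2); lra).
  assert (s < d2) by (pose proof (Rmin_r d1 d2); lra).
  pose proof (Hp s (proj1 Hs)).
  destruct (Zbounds (X (p s)) (Y (p s)) e He0 (K1 _ (HK s (proj1 Hs)) ltac:(lra)) (K2 _ (HK s (proj1 Hs)) ltac:(lra)))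
    as [B1 [B2 [B3 B4]]].
  unfold Z11, Z12, Z21, Z22. repeat split; lra.
Qed.


Lemma CL1 mu l x : x <> 0 -> fst (dL mu l (x, 0)) = -(IZR l * x + mu * (1 + x*x)) / (x*x).
Proof. intro H. unfold dL, Cdiv, Cinv, Cmul, polyL, Copp, Cadd, RtoC, Cnorm2, Defs.C1; simpl.
  field; auto. Qed.

Lemma CL2 mu l x y : x*x + y*y <> 0 ->
  fst (Cmul (dL mu l (x, y)) (y, -x)) = mu * y * (1 - (x*x+y*y)) / (x*x+y*y).
Proof. intro H. unfold dL, Cdiv, Cinv, Cmul, polyL, Copp, Cadd, RtoC, Cnorm2, Defs.C1; simpl.
  assert ((x * x - y * y) * (x * x - y * y) + (x * y + y * x) * (x * y + y * x) = (x*x+y*y)*(x*x+y*y)) as E by ring.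
  rewrite E. field. auto. Qed.

Lemma memU_pos al be t : 0 < t -> al < 0 < be -> SectorConj al be (t, 0).
Proof. intros Ht [H1 H2]. exists t, 0. split; auto. split; [lra|].
  unfold Cconj, Cpolar; simpl. rewrite cos_0, sin_0. f_equal; ring. Qed.
Lemma memU_neg al be t : 0 < t -> al < PI < be -> SectorConj al be (-t, 0).
Proof. intros Ht [H1 H2]. exists t, PI. split; auto. split; [lra|].
  unfold Cconj, Cpolar; simpl. rewrite cos_PI, sin_PI. f_equal; ring. Qed.
Lemma memK_pos al be t : 0 < t -> al <= 0 <= be -> ClSectorConj al be (t, 0).
Proof. intros Ht [H1 H2]. right. exists t, 0. split; auto. split; [lra|].
  unfold Cconj, Cpolar; simpl. rewrite cos_0, sin_0. f_equal; ring. Qed.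
Lemma memK_neg al be t : 0 < t -> al <= PI <= be -> ClSectorConj al be (-t, 0).
Proof. intros Ht [H1 H2]. right. exists t, PI. split; auto. split; [lra|].
  unfold Cconj, Cpolar; simpl. rewrite cos_PI, sin_PI. f_equal; ring. Qed.
Lemma memKp_pos al be t : 0 < t -> al <= 0 <= be -> ClSector al be (t, 0).
Proof. intros Ht [H1 H2]. right. exists t, 0. split; auto. split; [lra|].
  unfold Cpolar; simpl. rewrite cos_0, sin_0. f_equal; ring. Qed.
Lemma memKp_neg al be t : 0 < t -> al <= PI <= be -> ClSector al be (-t, 0).
Proof. intros Ht [H1 H2]. right. exists t, PI. split; auto. split; [lra|].
  unfold Cpolar; simpl. rewrite cos_PI, sin_PI. f_equal; ring. Qed.

Lemma norm_real x : Cnorm (Csub (x, 0) C0) = Rabs x.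
Proof. unfold Cnorm, Cnorm2, Csub, Cadd, Copp, C0; simpl.
  replace ((x + - 0) * (x + - 0) + (0 + - 0) * (0 + - 0)) with (Rsqr x) by (unfold Rsqr; ring).
  apply sqrt_Rsqr_abs. Qed.

Lemma sign_ok mu l x : 0 < mu -> x <> 0 -> Rabs x < mu / (Rabs (IZR l) + 1) ->
  fst (dL mu l (x, 0)) <= 0.
Proof.
  intros Hmu Hx Hlt. rewrite CL1 by auto.
  pose proof (Rabs_pos (IZR l)) as Hl0.
  assert (Rabs (IZR l * x) < mu).
  { rewrite Rabs_mult. apply Rle_lt_trans with (Rabs (IZR l) * (mu / (Rabs (IZR l) + 1))).
    apply Rmult_le_compat_l; lra.
    replace (Rabs (IZR l) * (mu / (Rabs (IZR l) + 1))) with (mu * (Rabs (IZR l) / (Rabs (IZR l) + 1))) by (field; lra).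
    assert (Rabs (IZR l) / (Rabs (IZR l) + 1) < 1).
    { apply Rmult_lt_reg_r with (Rabs (IZR l) + 1). lra. field_simplify; lra. }
    nra. }
  assert (0 < IZR l * x + mu * (1 + x * x)).
  { apply Rabs_def2 in H. nra. }
  assert (0 < x * x) by (assert (x*x = Rsqr x) by reflexivity; pose proof (Rsqr_pos_lt x Hx); lra).
  unfold Rdiv. assert (0 < / (x*x)) by (apply Rinv_0_lt_compat; auto). nra.
Qed.

Lemma fst_mul10 d : fst (Cmul d (1,0)) = fst d.
Proof. destruct d; unfold Cmul; simpl; ring. Qed.
Lemma fst_oppmul d : fst (Copp (Cmul d (-1,0))) = fst d.
Proof. destruct d; unfold Cmul, Copp; simpl; ring. Qed.

Definition cont0_all (K : Cx -> Prop) (X : Cx -> M2) := cont0 K X.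

Section RealLine.
Variables (om mu : R) (l : Z) (al be : R) (X Y : Cx -> M2).
Hypothesis Hmu : 0 < mu.
Hypothesis Hal : al < 0.
Hypothesis Hbe : PI < be.
Hypothesis HX : forall z, SectorConj al be z -> is_deriv_within (SectorConj al be) X z (Aprime om mu l X z).
Hypothesis HY : forall z, SectorConj al be z -> is_deriv_within (SectorConj al be) Y z (Aprime om mu l Y z).
Hypothesis CX : cont0 (ClSectorConj al be) X.
Hypothesis CY : cont0 (ClSectorConj al be) Y.

Let t0 := mu / (Rabs (IZR l) + 1).

Lemma t0_pos : 0 < t0.
Proof. unfold t0. apply Rdiv_lt_0_compat; auto. pose proof (Rabs_pos (IZR l)); lra. Qed.

Lemma sub1 a : Csub a C1 = C0 -> a = C1.
Proof. intro H. replace a with (Cadd (Csub a C1) C1) by ring. rewrite H. ring. Qed.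

Lemma realpos : forall s, 0 < s < t0 ->
  Z11 X Y (s, 0) = C1 /\ Z22 X Y (s, 0) = C1 /\ Z12 X Y (s, 0) = C0.
Proof.
  assert (HU : forall t, 0 < t < t0 -> SectorConj al be ((fun u => u) t, (fun _ => 0) t)).
  { intros t Ht. apply memU_pos; pose proof PI_RGT_0; lra. }
  assert (D1 : forall t, 0 < t < t0 -> derivable_pt_lim (fun u => u) t ((fun _ => 1) t)).
  { intros. apply derivable_pt_lim_id. }
  assert (D2 : forall t, 0 < t < t0 -> derivable_pt_lim (fun _ => 0) t ((fun _ => 0) t)).
  { intros. apply derivable_pt_lim_const. }
  pose proof (Zpath om mu l _ X Y _ _ _ _ 0 t0 HX HY HU D1 D2) as ZP.
  assert (LIM := Zlim (ClSectorConj al be) X Y (fun s => (s, 0)) CX CY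
     ltac:(intros; apply memK_pos; pose proof PI_RGT_0; lra) ltac:(intros; cbv beta; rewrite norm_real, Rabs_pos_eq; lra)).
  intros s Hs. split; [|split].
  - apply sub1. apply (lim_zero (fun t => Csub (Z11 X Y (t, 0)) C1) (fun _ => C0) t0); auto.
    + intros u Hu. apply (ZP u Hu).
    + intros; simpl; lra.
    + intros eps He. destruct (LIM eps He) as [d [Hd K]]. exists d; split; auto. intros; apply K; auto.
  - apply sub1. apply (lim_zero (fun t => Csub (Z22 X Y (t, 0)) C1) (fun _ => C0) t0); auto.
    + intros u Hu. apply (ZP u Hu).
    + intros; simpl; lra.
    + intros eps He. destruct (LIM eps He) as [d [Hd K]]. exists d; split; auto. intros; apply K; auto.
  - apply (lim_zero (fun t => Z12 X Y (t, 0)) (fun t => Cmul (dL mu l (t, 0)) (1, 0)) t0); auto.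
    + intros u Hu. apply (ZP u Hu).
    + intros u Hu. cbv beta. rewrite fst_mul10.
      apply (sign_ok mu l u Hmu ltac:(lra) ltac:(rewrite Rabs_pos_eq; unfold t0 in *; lra)).
    + intros eps He. destruct (LIM eps He) as [d [Hd K]]. exists d; split; auto. intros; apply K; auto.
Qed.

Lemma realneg : forall s, 0 < s < t0 ->
  Z11 X Y (-s, 0) = C1 /\ Z22 X Y (-s, 0) = C1 /\ Z21 X Y (-s, 0) = C0.
Proof.
  assert (HU : forall t, 0 < t < t0 -> SectorConj al be ((fun u => - u) t, (fun _ => 0) t)).
  { intros t Ht. apply memU_neg; pose proof PI_RGT_0; lra. }
  assert (D1 : forall t, 0 < t < t0 -> derivable_pt_lim (fun u => - u) t ((fun _ => -1) t)).
  { intros. exact (derivable_pt_lim_opp id t 1 (derivable_pt_lim_id t)). }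
  assert (D2 : forall t, 0 < t < t0 -> derivable_pt_lim (fun _ => 0) t ((fun _ => 0) t)).
  { intros. apply derivable_pt_lim_const. }
  pose proof (Zpath om mu l _ X Y _ _ _ _ 0 t0 HX HY HU D1 D2) as ZP.
  assert (LIM := Zlim (ClSectorConj al be) X Y (fun s => (-s, 0)) CX CY
     ltac:(intros; apply memK_neg; pose proof PI_RGT_0; lra) ltac:(intros; cbv beta; rewrite norm_real, Rabs_Ropp, Rabs_pos_eq; lra)).
  intros s Hs. split; [|split].
  - apply sub1. apply (lim_zero (fun t => Csub (Z11 X Y (-t, 0)) C1) (fun _ => C0) t0); auto.
    + intros u Hu. apply (ZP u Hu).
    + intros; simpl; lra.
    + intros eps He. destruct (LIM eps He) as [d [Hd K]]. exists d; split; auto. intros; apply K; auto.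
  - apply sub1. apply (lim_zero (fun t => Csub (Z22 X Y (-t, 0)) C1) (fun _ => C0) t0); auto.
    + intros u Hu. apply (ZP u Hu).
    + intros; simpl; lra.
    + intros eps He. destruct (LIM eps He) as [d [Hd K]]. exists d; split; auto. intros; apply K; auto.
  - apply (lim_zero (fun t => Z21 X Y (-t, 0)) (fun t => Copp (Cmul (dL mu l (-t, 0)) (-1, 0))) t0); auto.
    + intros u Hu. apply (ZP u Hu).
    + intros u Hu. cbv beta. rewrite fst_oppmul.
      apply (sign_ok mu l (-u) Hmu ltac:(lra) ltac:(rewrite Rabs_Ropp, Rabs_pos_eq; unfold t0 in *; lra)).
    + intros eps He. destruct (LIM eps He) as [d [Hd K]]. exists d; split; auto. intros; apply K; auto.
Qed.
End RealLine.


Lemma circle_N r t : (r * cos t) * (r * cos t) + (-(r * sin t)) * (-(r * sin t)) = r * r.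
Proof. pose proof (sin2_cos2 t). unfold Rsqr in H. nra. Qed.

Lemma coef_neg mu r t : 0 < mu -> 0 < r < 1 -> 0 <= t <= PI ->
  mu * (-(r * sin t)) * (1 - r * r) / (r * r) <= 0.
Proof. intros Hmu Hr Ht. pose proof (sin_ge_0 t ltac:(lra) ltac:(lra)).
  unfold Rdiv. assert (0 < / (r*r)) by (apply Rinv_0_lt_compat; nra).
  assert (0 <= mu * (r * sin t) * (1 - r * r)).
  { apply Rmult_le_pos; [apply Rmult_le_pos; [lra|apply Rmult_le_pos; lra]| nra]. }
  nra. Qed.

Section Arcs.
Variables (om mu : R) (l : Z) (al be : R) (X Y : Cx -> M2) (r : R).
Hypothesis Hmu : 0 < mu.
Hypothesis Hal : al < 0.
Hypothesis Hbe : PI < be.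
Hypothesis Hr : 0 < r < 1.
Hypothesis HX : forall z, SectorConj al be z -> is_deriv_within (SectorConj al be) X z (Aprime om mu l X z).
Hypothesis HY : forall z, SectorConj al be z -> is_deriv_within (SectorConj al be) Y z (Aprime om mu l Y z).

Lemma arc12 : Z12 X Y (r, 0) = C0 -> Z12 X Y (-r, 0) = C0.
Proof.
  intro H0.
  set (g1 := fun t => r * cos t). set (g2 := fun t => -(r * sin t)).
  set (v1 := fun t => r * - sin t). set (v2 := fun t => -(r * cos t)).
  assert (HU : forall t, al < t < be -> SectorConj al be (g1 t, g2 t)).
  { intros t Ht. exists r, t. split; [lra|]. split; auto.
    unfold g1, g2, Cconj, Cpolar; simpl. f_equal; ring. }
  assert (D1 : forall t, al < t < be -> derivable_pt_lim g1 t (v1 t)).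
  { intros. exact (derivable_pt_lim_scal cos r t (- sin t) (derivable_pt_lim_cos t)). }
  assert (D2 : forall t, al < t < be -> derivable_pt_lim g2 t (v2 t)).
  { intros. exact (derivable_pt_lim_opp (mult_real_fct r sin) t (r * cos t)
      (derivable_pt_lim_scal sin r t (cos t) (derivable_pt_lim_sin t))). }
  pose proof (Zpath om mu l _ X Y _ _ _ _ al be HX HY HU D1 D2) as ZP.
  pose proof PI_RGT_0.
  assert (E : Z12 X Y (g1 PI, g2 PI) = C0).
  { apply (mono_zero (fun t => Z12 X Y (g1 t, g2 t)) (fun t => Cmul (dL mu l (g1 t, g2 t)) (v1 t, v2 t)) 0 PI); [lra| | |].
    - intros s Hs. apply (ZP s ltac:(lra)).
    - intros s Hs. cbv beta.
      replace (v1 s, v2 s) with (g2 s, - g1 s) by (unfold v1, v2, g1, g2; f_equal; ring).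
      rewrite CL2.
      + unfold g1, g2 at 1 2 3 4 5. rewrite circle_N. apply coef_neg; auto.
      + unfold g1, g2. rewrite circle_N. nra.
    - cbv beta. unfold g1, g2. rewrite cos_0, sin_0.
      replace (r * 1, - (r * 0)) with (r, 0) by (f_equal; ring). auto. }
  unfold g1, g2 in E. rewrite cos_PI, sin_PI in E.
  replace (r * -1, - (r * 0)) with (-r, 0) in E by (f_equal; ring). auto.
Qed.

Lemma arc21 : Z21 X Y (-r, 0) = C0 -> Z21 X Y (r, 0) = C0.
Proof.
  intro H0.
  set (g1 := fun t => -(r * cos t)). set (g2 := fun t => -(r * sin t)).
  set (v1 := fun t => -(r * - sin t)). set (v2 := fun t => -(r * cos t)).
  assert (HU : forall t, PI - be < t < PI - al -> SectorConj al be (g1 t, g2 t)).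
  { intros t Ht. exists r, (PI - t). split; [lra|]. split; [lra|].
    unfold g1, g2, Cconj, Cpolar; simpl. rewrite Rtrigo_facts.cos_pi_minus, sin_PI_x. f_equal; ring. }
  assert (D1 : forall t, PI - be < t < PI - al -> derivable_pt_lim g1 t (v1 t)).
  { intros. exact (derivable_pt_lim_opp (mult_real_fct r cos) t (r * - sin t)
      (derivable_pt_lim_scal cos r t (- sin t) (derivable_pt_lim_cos t))). }
  assert (D2 : forall t, PI - be < t < PI - al -> derivable_pt_lim g2 t (v2 t)).
  { intros. exact (derivable_pt_lim_opp (mult_real_fct r sin) t (r * cos t)
      (derivable_pt_lim_scal sin r t (cos t) (derivable_pt_lim_sin t))). }
  pose proof (Zpath om mu l _ X Y _ _ _ _ (PI - be) (PI - al) HX HY HU D1 D2) as ZP.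
  pose proof PI_RGT_0.
  assert (E : Z21 X Y (g1 PI, g2 PI) = C0).
  { apply (mono_zero (fun t => Z21 X Y (g1 t, g2 t)) (fun t => Copp (Cmul (dL mu l (g1 t, g2 t)) (v1 t, v2 t))) 0 PI); [lra| | |].
    - intros s Hs. apply (ZP s ltac:(lra)).
    - intros s Hs. cbv beta.
      replace (fst (Copp (Cmul (dL mu l (g1 s, g2 s)) (v1 s, v2 s)))) with
        (fst (Cmul (dL mu l (g1 s, g2 s)) (g2 s, - g1 s)))
        by (destruct (dL mu l (g1 s, g2 s)); unfold v1, v2, g1, g2, Cmul, Copp; simpl; ring).
      rewrite CL2.
      + assert (Nr : g1 s * g1 s + g2 s * g2 s = r * r).
        { unfold g1, g2. pose proof (sin2_cos2 s). unfold Rsqr in H1. nra. }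
        rewrite Nr. unfold g2. apply coef_neg; auto.
      + assert (Nr : g1 s * g1 s + g2 s * g2 s = r * r).
        { unfold g1, g2. pose proof (sin2_cos2 s). unfold Rsqr in H1. nra. }
        rewrite Nr. nra.
    - cbv beta. unfold g1, g2. rewrite cos_0, sin_0.
      replace (- (r * 1), - (r * 0)) with (-r, 0) by (f_equal; ring). auto. }
  unfold g1, g2 in E. rewrite cos_PI, sin_PI in E.
  replace (- (r * -1), - (r * 0)) with (r, 0) in E by (f_equal; ring). auto.
Qed.
End Arcs.


Lemma eq_from_Z X Y p : Z11 X Y p = C1 -> Z12 X Y p = C0 -> Z21 X Y p = C0 -> Z22 X Y p = C1 ->
  Z11 X X p = C1 -> Y p = X p.
Proof.
  unfold Z11, Z12, Z21, Z22.
  destruct (X p) as [a11 a12 a21 a22], (Y p) as [b11 b12 b21 b22]; simpl.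
  intros H11 H12 H21 H22 Hd.
  set (det := Csub (Cmul a22 a11) (Cmul a12 a21)) in Hd.
  assert (E11 : Cmul b11 det = Cadd (Cmul a11 (Csub (Cmul a22 b11) (Cmul a12 b21))) (Cmul a12 (Csub (Cmul a11 b21) (Cmul a21 b11)))) by (unfold det; ring).
  assert (E12 : Cmul b12 det = Cadd (Cmul a11 (Csub (Cmul a22 b12) (Cmul a12 b22))) (Cmul a12 (Csub (Cmul a11 b22) (Cmul a21 b12)))) by (unfold det; ring).
  assert (E21 : Cmul b21 det = Cadd (Cmul a21 (Csub (Cmul a22 b11) (Cmul a12 b21))) (Cmul a22 (Csub (Cmul a11 b21) (Cmul a21 b11)))) by (unfold det; ring).
  assert (E22 : Cmul b22 det = Cadd (Cmul a21 (Csub (Cmul a22 b12) (Cmul a12 b22))) (Cmul a22 (Csub (Cmul a11 b22) (Cmul a21 b12)))) by (unfold det; ring).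
  rewrite Hd, H11, H12, H21, H22 in *.
  f_equal.
  - replace b11 with (Cmul b11 C1) by ring. rewrite E11. ring.
  - replace b12 with (Cmul b12 C1) by ring. rewrite E12. ring.
  - replace b21 with (Cmul b21 C1) by ring. rewrite E21. ring.
  - replace b22 with (Cmul b22 C1) by ring. rewrite E22. ring.
Qed.

Lemma cont0_H U K H : smooth_up_to U K H -> K C0 -> H C0 = Mid -> cont0 K H.
Proof.
  intros [Hn [E [_ HC]]] K0 H0 e He.
  destruct (HC O C0 K0 e He) as [d [Hd Hk]]. exists d; split; auto.
  intros y Ky Hy. specialize (Hk y Ky Hy). rewrite E, H0 in Hk. auto.
Qed.

Lemma Msub_Jc M : Msub (Jc M) Mid = Jc (Msub M Mid).
Proof. destruct M as [a b c d]; unfold Jc, Msub, Mid; simpl.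
  f_equal; repeat match goal with x : Cx |- _ => destruct x end;
  unfold Csub, Cadd, Copp, Cconj, Defs.C1, C0; simpl; f_equal; ring. Qed.

Lemma cont0_G al be Hp : cont0 (ClSector al be) Hp -> cont0 (ClSectorConj al be) (Gm Hp).
Proof.
  intros C e He. destruct (C e He) as [d [Hd K]]. exists d; split; auto.
  intros y Ky Hy. unfold Gm. rewrite Msub_Jc, Mnorm_Jc. apply K; auto.
  rewrite Csub0 in *. rewrite Cnorm_conj. auto.
Qed.

Definition isreal (w : Cx) := snd w = 0.
Lemma Cpow_real x n : isreal (Cpow (x, 0) n) /\ (x <> 0 -> fst (Cpow (x, 0) n) <> 0).
Proof.
  induction n as [|n [IH1 IH2]]; simpl.
  - unfold isreal, Defs.C1; simpl; split; [reflexivity|lra].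
  - unfold isreal in *. destruct (Cpow (x, 0) n) as [a b]; simpl in *. subst b. split; [ring|].
    intro Hx. specialize (IH2 Hx). intro E. apply IH2. 
    replace (x * a - 0 * 0) with (x * a) in E by ring. apply Rmult_integral in E. lra.
Qed.

Lemma Cinv_real a : isreal a -> fst a <> 0 -> isreal (Cinv a) /\ fst (Cinv a) <> 0.
Proof. destruct a as [x y]; unfold isreal, Cinv, Cnorm2; simpl; intros -> Hx.
  split. unfold Rdiv; ring.
  replace (x * x + 0 * 0) with (x*x) by ring. unfold Rdiv. intro E. apply Rmult_integral in E.
  destruct E as [E|E]; [lra|]. assert (x*x <> 0) by (intro E2; apply Hx; nra). apply (Rinv_neq_0_compat (x*x)); auto. Qed.

Lemma F_real mu l x : x <> 0 -> snd (m11 (F_L mu l (x, 0))) = 0 /\ fst (m11 (F_L mu l (x, 0))) <> 0.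
Proof.
  intro Hx. unfold F_L; cbn [m11].
  assert (P : isreal (Cpowz (x, 0) (- l)) /\ fst (Cpowz (x, 0) (- l)) <> 0).
  { destruct (- l)%Z as [|p|p]; simpl.
    - unfold isreal, Defs.C1; simpl; split; [reflexivity|lra].
    - destruct (Cpow_real x (Pos.to_nat p)); auto.
    - destruct (Cpow_real x (Pos.to_nat p)). apply Cinv_real; auto. }
  assert (Q : snd (Cmul (RtoC mu) (Csub (Cinv (x, 0)) (x, 0))) = 0).
  { unfold RtoC, Csub, Cadd, Copp, Cinv, Cmul, Cnorm2; simpl. unfold Rdiv. ring. }
  revert P Q. generalize (Cpowz (x, 0) (- l)). generalize (Cmul (RtoC mu) (Csub (Cinv (x, 0)) (x, 0))).
  intros [u w] [a b] [P1 P2] Q. unfold isreal in P1; simpl in *. subst b w.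
  unfold Cexp, Cmul; simpl. rewrite cos_0, sin_0. split; [ring|].
  replace (a * (exp u * 1) - 0 * (exp u * 0)) with (a * exp u) by ring.
  intro E. apply Rmult_integral in E. destruct E; [lra|]. pose proof (exp_pos u). lra.
Qed.


Lemma extract0 (P : M2) (f c : Cx) : snd f = 0 -> fst f <> 0 -> 1/2 < fst (m11 P) ->
  Mmul (Jc P) (mkM2 f C0 C0 C1) = Mmul (Mmul P (mkM2 f C0 C0 C1)) (StokesC0 c) -> snd c = 0.
Proof.
  destruct P as [[a b] [x y] p21 p22], f as [fr fi], c as [u v]; simpl. intros -> Hf Ha E.
  pose proof (f_equal m11 E) as E11. pose proof (f_equal m12 E) as E12.
  unfold Jc, Mmul, StokesC0, Cmul, Cadd, Copp, Cconj, C0, Defs.C1 in E11, E12; simpl in E11, E12.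
  injection E11; intros F1 F2. injection E12; intros G1 G2.
  assert (Hb : b = 0).
  { assert ((2*b) * fr = 0) by nra. apply Rmult_integral in H. lra. }
  subst b.
  assert ((a * fr) * v = 0) by nra.
  apply Rmult_integral in H. destruct H as [H|H]; auto.
  apply Rmult_integral in H. lra.
Qed.

Lemma extract1 (P : M2) (f c : Cx) : snd f = 0 -> 1/2 < fst (m22 P) ->
  Mmul P (mkM2 f C0 C0 C1) = Mmul (Mmul (Jc P) (mkM2 f C0 C0 C1)) (StokesC1 c) -> snd c = 0.
Proof.
  destruct P as [p11 p12 [x y] [a b]], f as [fr fi], c as [u v]; simpl. intros -> Ha E.
  pose proof (f_equal m21 E) as E21. pose proof (f_equal m22 E) as E22.
  unfold Jc, Mmul, StokesC1, Cmul, Cadd, Copp, Cconj, C0, Defs.C1 in E21, E22; simpl in E21, E22.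
  injection E21; intros F1 F2. injection E22; intros G1 G2.
  assert (Hb : b = 0) by nra. subst b.
  assert (a * v = 0) by nra.
  apply Rmult_integral in H. lra.
Qed.

Lemma conj_real x : Cconj (x, 0) = (x, 0).
Proof. unfold Cconj; simpl; f_equal; ring. Qed.

Lemma near_fst A : Mnorm (Msub A Mid) < 1/2 -> 1/2 < fst (m11 A) /\ 1/2 < fst (m22 A).
Proof.
  intro H. destruct (near_parts A _ H) as [H1 [_ [_ H4]]].
  pose proof (Rabs_fst_le (Csub (m11 A) C1)). pose proof (Rabs_fst_le (Csub (m22 A) C1)).
  assert (A1 : Rabs (fst (Csub (m11 A) C1)) < 1/2) by lra.
  assert (A2 : Rabs (fst (Csub (m22 A) C1)) < 1/2) by lra.
  apply Rabs_def2 in A1. apply Rabs_def2 in A2.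
  unfold Csub, Cadd, Copp, Defs.C1 in *; simpl in *. lra.
Qed.


Theorem mainTheorem3 :
  forall (om mu B : R) (l : Z) (al be : R),
    0 < om -> 0 < mu -> IZR l = B / om ->
    - (PI / 2) < al < 0 -> PI < be < 3 * PI / 2 ->
    forall Hp Hm : Cx -> M2,
      normalizing om mu l (Sector al be) (ClSector al be) Hp ->
      normalizing om mu l (SectorConj al be) (ClSectorConj al be) Hm ->
      forall c0 c1 : Cx,
        (forall z, Sigma0 al be z ->
           W_L mu l Hm z = Mmul (W_L mu l Hp z) (StokesC0 c0)) ->
        (forall z, Sigma1 al be z ->
           W_L mu l Hp z = Mmul (W_L mu l Hm z) (StokesC1 c1)) ->
        Im c0 = 0 /\ Im c1 = 0.
Proof.
  intros om mu B l al be Hom Hmu HlB [Hal1 Hal] [Hbe Hbe2] Hp Hm NP NM c0 c1 S0 S1.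
  destruct NP as [SP [P0 [_ PE]]]. destruct NM as [SM [M0 [_ ME]]].
  pose proof PI_RGT_0 as HPI.
  assert (HX : forall z, SectorConj al be z ->
     is_deriv_within (SectorConj al be) Hm z (Aprime om mu l Hm z)) by exact ME.
  assert (HY : forall z, SectorConj al be z ->
     is_deriv_within (SectorConj al be) (Gm Hp) z (Aprime om mu l (Gm Hp) z)).
  { intros z Hz. rewrite <- Aprime_G. exact (G_deriv_raw (Sector al be) Hp z _ (PE _ Hz)). }
  assert (CPp : cont0 (ClSector al be) Hp) by (apply (cont0_H _ _ _ SP); auto; left; reflexivity).
  assert (CX : cont0 (ClSectorConj al be) Hm).
  { apply (cont0_H _ _ _ SM); auto. unfold ClSectorConj. rewrite Cconj_C0. left; reflexivity. }
  assert (CY : cont0 (ClSectorConj al be) (Gm Hp)) by (apply cont0_G; auto).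
  set (t0 := mu / (Rabs (IZR l) + 1)).
  assert (Ht0 : 0 < t0) by (unfold t0; apply Rdiv_lt_0_compat; auto; pose proof (Rabs_pos (IZR l)); lra).
  destruct (CPp (1/2) ltac:(lra)) as [d [Hd Kd]].
  set (r := Rmin (Rmin t0 1) d / 2).
  assert (Hr : 0 < r) by (unfold r; assert (0 < Rmin (Rmin t0 1) d) by (repeat apply Rmin_glb_lt; lra); lra).
  assert (Hrt : r < t0) by (unfold r; pose proof (Rmin_l (Rmin t0 1) d); pose proof (Rmin_l t0 1); lra).
  assert (Hr1 : r < 1) by (unfold r; pose proof (Rmin_l (Rmin t0 1) d); pose proof (Rmin_r t0 1); lra).
  assert (Hrd : r < d) by (unfold r; pose proof (Rmin_r (Rmin t0 1) d); lra).
  destruct (realpos om mu l al be Hm (Gm Hp) Hmu Hal Hbe HX HY CX CY r ltac:(fold t0; lra)) as [A11 [A22 A12]].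
  destruct (realneg om mu l al be Hm (Gm Hp) Hmu Hal Hbe HX HY CX CY r ltac:(fold t0; lra)) as [B11 [B22 B21]].
  destruct (realpos om mu l al be Hm Hm Hmu Hal Hbe HX HX CX CX r ltac:(fold t0; lra)) as [D1 _].
  destruct (realneg om mu l al be Hm Hm Hmu Hal Hbe HX HX CX CX r ltac:(fold t0; lra)) as [D2 _].
  pose proof (arc12 om mu l al be Hm (Gm Hp) r Hmu Hal Hbe ltac:(lra) HX HY A12) as B12.
  pose proof (arc21 om mu l al be Hm (Gm Hp) r Hmu Hal Hbe ltac:(lra) HX HY B21) as A21.
  pose proof (eq_from_Z Hm (Gm Hp) (r, 0) A11 A12 A21 A22 D1) as EqP.
  pose proof (eq_from_Z Hm (Gm Hp) (-r, 0) B11 B12 B21 B22 D2) as EqN.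
  unfold Gm in EqP, EqN. rewrite conj_real in EqP, EqN.
  assert (NP : Mnorm (Msub (Hp (r, 0)) Mid) < 1/2).
  { apply Kd. apply memKp_pos; lra. rewrite norm_real, Rabs_pos_eq; lra. }
  assert (NN : Mnorm (Msub (Hp (-r, 0)) Mid) < 1/2).
  { apply Kd. apply memKp_neg; lra. rewrite norm_real, Rabs_Ropp, Rabs_pos_eq; lra. }
  split.
  - assert (Sg : Sigma0 al be (-r, 0)).
    { split; [|split].
      - exists r, PI. split; [lra|]. split; [lra|]. unfold Cpolar. rewrite cos_PI, sin_PI. f_equal; ring.
      - apply memU_neg; lra.
      - simpl; lra. }
    specialize (S0 _ Sg). unfold W_L in S0. rewrite <- EqN in S0.
    destruct (F_real mu l (-r) ltac:(lra)) as [F1 F2].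
    change (F_L mu l (-r, 0)) with (mkM2 (m11 (F_L mu l (-r, 0))) C0 C0 Defs.C1) in S0.
    exact (extract0 (Hp (-r, 0)) _ c0 F1 F2 (proj1 (near_fst _ NN)) S0).
  - assert (Sg : Sigma1 al be (r, 0)).
    { split; [|split].
      - exists r, 0. split; [lra|]. split; [lra|]. unfold Cpolar. rewrite cos_0, sin_0. f_equal; ring.
      - apply memU_pos; lra.
      - simpl; lra. }
    specialize (S1 _ Sg). unfold W_L in S1. rewrite <- EqP in S1.
    destruct (F_real mu l r ltac:(lra)) as [F1 F2].
    change (F_L mu l (r, 0)) with (mkM2 (m11 (F_L mu l (r, 0))) C0 C0 Defs.C1) in S1.
    exact (extract1 (Hp (r, 0)) _ c1 F1 (proj2 (near_fst _ NP)) S1).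
Qed.
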